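(* Let $\mathcal{R}$ be a left-linear TRS and suppose $s$ strongly $p$-converges to $t$ in $\mathcal{R}$. Then there is a term $t'$ with $t\le_\bot t'$ such that $s$ weakly $p$-converges to $t'$ in $\mathcal{R}$.
   Context: Partial terms over $\Sigma_\bot=\Sigma\uplus\{\bot\}$ ordered by $\le_\bot$ ($s\le_\bot t$ iff $s$ is $t$ with some subterms replaced by $\bot$) form a complete semilattice; $\liminf_{\iota\to\alpha}a_\iota=\bigvee_{\beta<\alpha}\bigwedge_{\beta\le\iota<\alpha}a_\iota$. For a reduction $S=(t_\iota\to_{\pi_\iota}t_{\iota+1})_{\iota<\alpha}$: it weakly $p$-converges to $t$ if $\liminf_{\iota\to\lambda}t_\iota=t_\lambda$ for every limit $\lambda<\alpha$ and $t=\liminf_{\iota\to\hat\alpha}t_\iota$ ($\hat\alpha=\alpha+1$ if closed, so $t$ is the last term, $\hat\alpha=\alpha$ if open). With contexts $c_\iota$ ($t_\iota$ with position $\pi_\iota$ replaced by $\bot$), it strongly $p$-converges to $t$ if $\liminf_{\iota\to\lambda}c_\iota=t_\lambda$ for every limit $\lambda<\alpha$ and $t$ is the last term (closed) or $t=\liminf_{\iota\to\alpha}c_\iota$ (open). *)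

(* Defs.v *)
From mathcomp Require Import ssreflect ssrfun ssrbool eqtype ssrnat seq.

Set Implicit Arguments.
Unset Strict Implicit.
Unset Printing Implicit Defensive.

Definition pos := seq nat.

Inductive lab (Sig : Type) : Type :=
| LFun of Sig
| LVar of nat
| LBot.
Arguments LVar {Sig} _.
Arguments LBot {Sig}.

Section Terms.
Variable Sig : Type.
Variable ar : Sig -> nat.

(* a term is a labelling of a tree domain: the root exists, and the
   children of a position p are exactly 0..arity-1 of the function
   symbol at p (variables and bot are nullary). *)
Definition is_term (f : pos -> option (lab Sig)) : Prop :=
  f [::] <> None /\
  forall (p : pos) (i : nat),
    f (rcons p i) <> None <-> exists g, f p = Some (LFun g) /\ i < ar g.

Record term := mkTerm { tf :> pos -> option (lab Sig); twf : is_term tf }.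

Definition le_bot (s t : term) : Prop :=
  forall p, s p <> None -> s p <> Some LBot -> s p = t p.

Definition is_glb (P : term -> Prop) (m : term) : Prop :=
  (forall u, P u -> le_bot m u) /\
  (forall m', (forall u, P u -> le_bot m' u) -> le_bot m' m).

Definition is_lub (P : term -> Prop) (m : term) : Prop :=
  (forall u, P u -> le_bot u m) /\
  (forall m', (forall u, P u -> le_bot u m') -> le_bot m m').

(* (t sigma) at position q ++ p, where q is the part already traversed *)
Fixpoint substf (t : pos -> option (lab Sig)) (sigma : nat -> term)
         (q : pos) (p : pos) : option (lab Sig) :=
  match t q with
  | Some (LVar x) => sigma x p
  | _ => match p with
         | [::] => t q
         | i :: p' => substf t sigma (rcons q i) p'
         end
  end.

Definition apply_subst (t : pos -> option (lab Sig)) (sigma : nat -> term) :=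
  substf t sigma [::].

Definition replace (s : pos -> option (lab Sig)) (pi : pos)
           (u : pos -> option (lab Sig)) : pos -> option (lab Sig) :=
  fun p => if prefix pi p then u (drop (size pi) p) else s p.

Definition bot_fun : pos -> option (lab Sig) :=
  fun p => if p is [::] then Some LBot else None.

Definition rule := (term * term)%type.

Definition finite_term (t : term) : Prop :=
  exists n, forall p : pos, n < size p -> t p = None.

Definition occurs (x : nat) (t : term) : Prop := exists p, t p = Some (LVar x).

Definition bot_free (t : term) : Prop := forall p, t p <> Some LBot.

Definition is_rule (rho : rule) : Prop :=
  let: (l, r) := rho in
  finite_term l /\ (forall x, l [::] <> Some (LVar x)) /\
  bot_free l /\ bot_free r /\ (forall x, occurs x r -> occurs x l).

Definition TRS (R : rule -> Prop) : Prop := forall rho, R rho -> is_rule rho.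

Definition linear (t : term) : Prop :=
  forall x p q, t p = Some (LVar x) -> t q = Some (LVar x) -> p = q.

Definition left_linear (R : rule -> Prop) : Prop :=
  forall rho, R rho -> linear rho.1.

Definition step (s t : term) (pi : pos) (rho : rule) (sigma : nat -> term) : Prop :=
  (forall p, s (pi ++ p) = apply_subst rho.1 sigma p) /\
  (forall p, t p = replace s pi (apply_subst rho.2 sigma) p).

End Terms.

Record wordT := WOrd {
  wcar :> Type;
  wlt : wcar -> wcar -> Prop;
  wlt_wf : well_founded wlt;
  wlt_trans : forall x y z, wlt x y -> wlt y z -> wlt x z;
  wlt_total : forall x y, wlt x y \/ x = y \/ wlt y x }.

(* An ordinal alpha is (the order type of) a well-order W; the ordinals
   <= alpha are modelled by option W, with None = alpha itself (top). *)
Section Ord.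
Variable W : wordT.

Definition olt (i j : option W) : Prop :=
  match i, j with
  | Some x, Some y => wlt x y
  | Some _, None => True
  | None, _ => False
  end.

Definition ole (i j : option W) : Prop := olt i j \/ i = j.

Definition succ_of (i j : option W) : Prop :=
  olt i j /\ forall k, olt i k -> ole j k.

Definition is_limit (j : option W) : Prop :=
  (exists i, olt i j) /\ forall i, ~ succ_of i j.

Definition is_least (j : option W) : Prop := forall k, ole j k.

Definition is_liminf Sig (ar : Sig -> nat) (a : option W -> term ar)
           (lam : option W) (t : term ar) : Prop :=
  exists m : option W -> term ar,
    (forall beta, olt beta lam ->
       is_glb (fun u => exists iota, ole beta iota /\ olt iota lam /\ u = a iota)
              (m beta)) /\
    is_lub (fun u => exists beta, olt beta lam /\ u = m beta) t.

End Ord.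

Section Reductions.
Variable Sig : Type.
Variable ar : Sig -> nat.
Variable R : rule ar -> Prop.

(* S = (t_iota ->_{pi_iota} t_{iota+1})_{iota < alpha}, alpha = rW;
   terms t_iota for iota <= alpha (rterm None is the term at index alpha,
   only meaningful when S is closed). *)
Record reduction := Reduction {
  rW : wordT;
  rterm : option rW -> term ar;
  rpos : rW -> pos;
  rrule : rW -> rule ar;
  rsubst : rW -> nat -> term ar;
  rrule_in : forall w, R (rrule w);
  rstep : forall w j, succ_of (Some w) j ->
            step (rterm (Some w)) (rterm j) (rpos w) (rrule w) (rsubst w) }.

Arguments rterm : clear implicits.
Arguments rpos : clear implicits.
Arguments rrule : clear implicits.
Arguments rsubst : clear implicits.

Definition starts_at (S : reduction) (s : term ar) : Prop :=
  forall j, is_least j -> rterm S j = s.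

(* S is closed iff its length is 0 or a successor ordinal *)
Definition closed (S : reduction) : Prop := ~ is_limit (None : option (rW S)).

Definition weakly_converges (S : reduction) (t : term ar) : Prop :=
  (forall w, is_limit (Some w) ->
     is_liminf (rterm S) (Some w) (rterm S (Some w))) /\
  (closed S -> t = rterm S None) /\
  (~ closed S -> is_liminf (rterm S) None t).

(* contexts c_iota = t_iota[bot]_{pi_iota}; extended arbitrarily at alpha *)
Definition strongly_converges (S : reduction) (t : term ar) : Prop :=
  exists c : option (rW S) -> term ar,
    (forall w p, c (Some w) p = replace (rterm S (Some w)) (rpos S w) (@bot_fun Sig) p) /\
    (forall w, is_limit (Some w) -> is_liminf c (Some w) (rterm S (Some w))) /\
    (closed S -> t = rterm S None) /\
    (~ closed S -> is_liminf c None t).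

Definition weakly_p_converges_to (s t : term ar) : Prop :=
  exists S : reduction, starts_at S s /\ weakly_converges S t.

Definition strongly_p_converges_to (s t : term ar) : Prop :=
  exists S : reduction, starts_at S s /\ strongly_converges S t.

End Reductions.

(* Main.v *)
Require Import Defs.
From mathcomp Require Import ssreflect ssrfun ssrbool eqtype ssrnat seq.
From Stdlib Require Import Classical ClassicalEpsilon FunctionalExtensionality.

Set Implicit Arguments.
Unset Strict Implicit.
Unset Printing Implicit Defensive.

Definition dec (P : Prop) : {P} + {~P} := excluded_middle_informative P.

Section T.
Variable Sig : Type.
Variable ar : Sig -> nat.
Notation term := (term ar).
Notation le := (@le_bot Sig ar).

Lemma le_refl (u : term) : le u u. Proof. by move=> p. Qed.
Lemma le_trans (u v w : term) : le u v -> le v w -> le u w.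
Proof. move=> h1 h2 p n b. rewrite (h1 p n b). apply h2; by rewrite -(h1 p n b). Qed.

Lemma term_root (u : term) : u [::] <> None. Proof. by case: (twf u). Qed.
Lemma term_child (u : term) p i :
  u (rcons p i) <> None <-> exists g, u p = Some (LFun g) /\ i < ar g.
Proof. by case: (twf u). Qed.

Lemma term_pre (u:term) q r : u (q ++ r) <> None -> u q <> None.
Proof.
elim/last_ind: r => [|r j IH]; first by rewrite cats0.
rewrite -rcons_cat => /term_child [g [h _]]; apply IH; by rewrite h.
Qed.

Lemma term_anc (u:term) q i r : u (q ++ i :: r) <> None ->
  exists g, u q = Some (LFun g) /\ i < ar g.
Proof. rewrite -cat_rcons => /term_pre. by move/term_child. Qed.

Lemma le_dom (u v : term) p : le u v -> u p <> None -> v p <> None.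
Proof.
move=> h. elim/last_ind: p => [|p i _]; first by move=> _; apply term_root.
move=> /term_child [g [hg hi]]. apply/term_child. exists g; split => //.
rewrite -(h p); by rewrite hg.
Qed.

Lemma rcons_decomp (p : pos) i q j r : rcons p i = q ++ j :: r ->
  (q = p /\ j = i /\ r = [::]) \/ (exists r', r = rcons r' i /\ p = q ++ j :: r').
Proof.
case/lastP: r => [|r' k].
  rewrite cats1 => /rcons_inj [-> ->]; by left.
rewrite -rcons_cons -rcons_cat => /rcons_inj [-> ->]; right; by exists r'.
Qed.

Definition anc (P : term -> Prop) (p : pos) : Prop :=
  forall q i r, p = q ++ i :: r -> exists g, forall u, P u -> u q = Some (LFun g).

Definition glbf (P : term -> Prop) (u0 : term) (p : pos) : option (lab Sig) :=
  if dec (anc P p /\ u0 p <> None) then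
    (if dec (forall u, P u -> u p = u0 p) then u0 p else Some LBot)
  else None.

Lemma glb_wf P u0 : P u0 -> is_term ar (glbf P u0).
Proof.
move=> H0; split.
  rewrite /glbf. case: dec => [[ha h]|hn]; first by case: dec.
  exfalso; apply: hn; split; last exact: term_root.
  by move=> [|? ?] ? ?.
move=> p i; split.
  rewrite /glbf. case: dec => [[ha hd] _|]; last by [].
  have [g hg] := ha p i [::] (esym (cats1 p i)).
  have hu0 := hg _ H0.
  exists g; split; last first.
    by have [g' [e hi]] := (term_child u0 p i).1 hd; rewrite hu0 in e; case: e => ->.
  case: dec => [hX|hn]; last first.
    exfalso; apply: hn; split; last by rewrite hu0.
    move=> q j r e. apply: (ha q j (rcons r i)). by rewrite e rcons_cat.
  case: dec => // hn; exfalso; apply: hn => u hu; by rewrite hu0 hg.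
move=> [g [hg hi]]. move: hg; rewrite /glbf.
case: dec => [[ha hd]|] //. case: dec => [hag|hna]; last by [].
move=> hu0.
case: dec => [hX|hn]. case: dec => // hY. apply/term_child; by exists g.
exfalso; apply: hn; split; last by apply/term_child; exists g.
move=> q j r /rcons_decomp [[-> [hj hr]]|[r1 [hr1 hp1]]].
  by exists g => u hu; rewrite hag.
by apply: (ha q j r1).
Qed.

Lemma glb_ok P u0 (H0 : P u0) : is_glb P (mkTerm (glb_wf H0)).
Proof.
split.
  move=> u hu p /=; rewrite /glbf; case: dec => [hX|] //.
  case: dec => [hag h1 h2|hna h1 ]; [by rewrite hag | by move=> []].
move=> m' hm p hn hb /=.
have e : forall u, P u -> m' p = u p by move=> u hu; apply hm.
rewrite /glbf. case: dec => [[ha hd]|hn'].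
  case: dec => [hX|hn2]; first by apply e.
  exfalso; apply hn2 => u hu; by rewrite -(e u hu) -(e u0 H0).
exfalso; apply hn'; split; last by rewrite -(e u0 H0).
move=> q j r hp. subst p. have [g [hg _]] := term_anc hn.
exists g => u hu. rewrite -(hm u hu q) ?hg //.
Qed.

Lemma glb_ex (P : term -> Prop) : (exists u, P u) -> exists m, is_glb P m.
Proof. move=> [u0 H0]; eexists; exact: glb_ok H0. Qed.

Definition directed (D : term -> Prop) :=
  forall u v, D u -> D v -> exists w, D w /\ le u w /\ le v w.

Definition lubf (D : term -> Prop) (p : pos) :=
  match dec (exists u, D u /\ u p <> None /\ u p <> Some LBot) with
  | left h => (proj1_sig (constructive_indefinite_description _ h)) p
  | right _ => if dec (exists u, D u /\ u p <> None) then Some LBot else None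
  end.

Lemma lubf_spec (D : term -> Prop) p :
  (exists u, D u /\ u p <> None /\ u p <> Some LBot /\ lubf D p = u p) \/
  ((~ exists u, D u /\ u p <> None /\ u p <> Some LBot) /\
   lubf D p = if dec (exists u, D u /\ u p <> None) then Some LBot else None).
Proof.
rewrite /lubf; case: (dec (exists u, D u /\ u p <> None /\ u p <> Some LBot)) => [h|hn].
2: by right; split. left. destruct (constructive_indefinite_description _ h) as [v [hv [h1 h2]]]; simpl.
by exists v.
Qed.

Lemma lubf_val (D : term -> Prop) (u : term) p : directed D -> D u -> u p <> None -> u p <> Some LBot ->
  lubf D p = u p.
Proof.
move=> hd hu h1 h2. case: (lubf_spec D p) => [[v [hv [h3 [h4 ->]]]]|[hn _]].
  have [w [_ [huw hvw]]] := hd u v hu hv.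
  by rewrite (hvw p h3 h4) (huw p h1 h2).
exfalso; apply hn; by exists u.
Qed.

Lemma lubf_def (D : term -> Prop) (u : term) p : D u -> u p <> None -> lubf D p <> None.
Proof.
move=> hu h. case: (lubf_spec D p) => [[v [_ [? [_ ->]]]]//|[_ ->]].
case: dec => // hn; exfalso; apply hn; by exists u.
Qed.

Lemma lubf_def' (D : term -> Prop) p : lubf D p <> None -> exists u, D u /\ u p <> None.
Proof.
case: (lubf_spec D p) => [[v [hv [? [_ ->]]]]|[_ ->]]; first by exists v.
by case: dec.
Qed.

Lemma lub_wf (D : term -> Prop) : (exists u, D u) -> directed D -> is_term ar (lubf D).
Proof.
move=> [u0 H0] hd; split.
  apply: (lubf_def H0); exact: term_root.
move=> p i; split.
  move=> /lubf_def' [u [hu /term_child [g [hg hi]]]].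
  exists g; split => //. by rewrite (lubf_val hd hu) ?hg.
move=> [g [hg hi]]. move: hg.
case: (lubf_spec D p) => [[v [hv [h3 [h4 ->]]]]|[_ ->]]; last by case: dec.
move=> e. apply: (lubf_def hv). apply/term_child; by exists g.
Qed.

Lemma lub_ok (D : term -> Prop) (h1 : exists u, D u) (h2 : directed D) : is_lub D (mkTerm (lub_wf h1 h2)).
Proof.
split.
  move=> u hu p hn hb /=. by rewrite (lubf_val h2 hu).
move=> m' hm p /=.
case: (lubf_spec D p) => [[v [hv [h3 [h4 ->]]]]|[_ ->]]; last by case: dec => // _ _ [].
move=> _ _; exact: hm.
Qed.

End T.

Section S.
Variable Sig : Type.
Variable ar : Sig -> nat.
Notation term := (term ar).
Notation le := (@le_bot Sig ar).
Notation lab := (lab Sig).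

Definition lef (f g : pos -> option lab) :=
  forall p, f p <> None -> f p <> Some LBot -> f p = g p.

Lemma substf_var (t : pos -> option lab) (s : nat -> term) q p x :
  t q = Some (LVar x) -> substf t s q p = s x p.
Proof. by move=> h; case: p => [|i p] /=; rewrite h. Qed.

Lemma substf_nil (t : pos -> option lab) (s : nat -> term) q :
  (forall x, t q <> Some (LVar x)) -> substf t s q [::] = t q.
Proof. by move=> h /=; case E: (t q) => [[g|x|]|] //; case: (h x). Qed.

Lemma substf_cons (t : pos -> option lab) (s : nat -> term) q i p :
  (forall x, t q <> Some (LVar x)) -> substf t s q (i :: p) = substf t s (rcons q i) p.
Proof. by move=> h /=; case E: (t q) => [[g|x|]|] //; case: (h x). Qed.

Lemma substf_none (t : term) (s : nat -> term) q p :
  t q = None -> substf t s q p = None.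
Proof.
elim: p q => [|i p IH] q h; first by rewrite substf_nil h.
rewrite substf_cons ?h //. apply IH.
case E: (t (rcons q i)) => [a|] //. exfalso.
have : t (rcons q i) <> None by rewrite E.
by move/term_child => [g [hg _]]; rewrite hg in h.
Qed.

Lemma substf_shift (t : pos -> option lab) (s : nat -> term) q p a :
  (forall q0 i r, q = q0 ++ i :: r -> exists g, t (a ++ q0) = Some (LFun g)) ->
  substf t s a (q ++ p) = substf t s (a ++ q) p.
Proof.
elim: q a => [|i q IH] a h; first by rewrite cats0.
have [g hg] := h [::] i q erefl. rewrite cats0 in hg.
rewrite cat_cons substf_cons ?hg // IH -?cat_rcons //.
move=> q0 j r e.
have [g' hg'] : exists g, t (a ++ i :: q0) = Some (LFun g) by apply: (h (i :: q0) j r); rewrite e.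
exists g'. by rewrite cat_rcons.
Qed.

Lemma substf_mono (r : pos -> option lab) (s1 s2 : nat -> term) :
  (forall x, le (s1 x) (s2 x)) -> forall q, lef (substf r s1 q) (substf r s2 q).
Proof.
move=> hs q p; elim: p q => [|i p IH] q.
  case E: (r q) => [[g|x|]|]; try by rewrite !substf_nil ?E.
  rewrite !(substf_var _ _ E); exact: hs.
case E: (r q) => [[g|x|]|]; try by rewrite !substf_cons ?E //; apply IH.
rewrite !(substf_var _ _ E); exact: hs.
Qed.

Lemma subst_wf (r : term) (s : nat -> term) : is_term ar (apply_subst r s).
Proof.
rewrite /apply_subst; split.
  case E: (r [::]) => [[g|x|]|]; try by rewrite substf_nil ?E.
    rewrite (substf_var _ _ E); exact: term_root.
  by have := term_root (u:=r); rewrite E.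
suff H : forall q p i, substf r s q (rcons p i) <> None <->
   exists g, substf r s q p = Some (LFun g) /\ i < ar g by apply H.
move=> q p; elim: p q => [|j p IH] q i.
  case E: (r q) => [[g|x|]|]; try rewrite !(substf_var _ _ E).
  - rewrite [substf r s q [::]]substf_nil ?E // -[rcons [::] i]/[:: i] substf_cons ?E //.
    have key : r (rcons q i) <> None <-> exists g0, Some (LFun g) = Some (LFun g0) /\ i < ar g0.
      rewrite term_child E; split => [[g' [-> ?]]|[g' [-> ?]]]; by exists g'.
    case E2: (r (rcons q i)) => [[g'|y|]|]; try (rewrite substf_nil; [exact: key| by rewrite E2]).
    rewrite (substf_var _ _ E2); split.
      move=> _; apply/key; by rewrite E2.
    move=> _; exact: term_root.
  - exact: (term_child (s x) [::] i).
  - rewrite [substf r s q [::]]substf_nil ?E // -[rcons [::] i]/[:: i] substf_cons ?E // substf_none; first by split => // [[g' [? _]]].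
    case E3: (r (rcons q i)) => [a|] //; exfalso. have: r (rcons q i) <> None by rewrite E3.
    by move/term_child => [g' [hg' _]]; rewrite hg' in E.
  - rewrite [substf r s q [::]]substf_nil ?E // -[rcons [::] i]/[:: i] substf_cons ?E // substf_none; first by split => // [[g' [? _]]].
    case E3: (r (rcons q i)) => [a|] //; exfalso. have: r (rcons q i) <> None by rewrite E3.
    by move/term_child => [g' [hg' _]]; rewrite hg' in E.
case E: (r q) => [[g|x|]|]; try by rewrite rcons_cons !substf_cons ?E //; apply IH.
rewrite rcons_cons !(substf_var _ _ E). exact: (term_child (s x) (j :: p) i).
Qed.

Definition substT (r : term) (s : nat -> term) : term := mkTerm (subst_wf r s).

Lemma prefix_rconsE (pi p : pos) i : prefix pi (rcons p i) -> pi = rcons p i \/ prefix pi p.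
Proof.
case/prefixP => s2. case/lastP: s2 => [|s k]; first by rewrite cats0; left.
rewrite -rcons_cat => /rcons_inj [-> _]; right; exact: prefix_prefix.
Qed.

Lemma replace_wf (s u : term) pi : s pi <> None -> is_term ar (replace s pi u).
Proof.
move=> hpi; rewrite /replace; split.
  case: pi hpi => [|k pi] hpi /=; [exact: term_root | exact: term_root].
move=> p i.
have hdrop : prefix pi p -> drop (size pi) (rcons p i) = rcons (drop (size pi) p) i.
  by case/prefixP => s2 ->; rewrite rcons_cat !drop_size_cat.
case hp: (prefix pi p).
  rewrite (prefix_trans hp (prefix_rcons p i)) hdrop //. exact: (term_child u).
case hp2: (prefix pi (rcons p i)).
  case: (prefix_rconsE hp2) => [e|]; last by rewrite hp.
  have h1 : s (rcons p i) <> None by rewrite -e.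
  split => hh; first exact: (proj1 (term_child s p i) h1).
  rewrite e drop_size. exact: term_root.
exact: (term_child s).
Qed.

Lemma bot_wf : is_term ar (@bot_fun Sig).
Proof.
split => //. move=> p i; split; first by case: p.
by move=> [g [hg _]]; case: p hg.
Qed.
Definition botT : term := mkTerm bot_wf.

Lemma sub_wf (u : term) d : u d <> None -> is_term ar (fun p => u (d ++ p)).
Proof.
move=> h; split; first by rewrite cats0.
move=> p i; rewrite -rcons_cat; exact: term_child.
Qed.

Definition sub (u : term) d : term :=
  match dec (u d <> None) with left h => mkTerm (sub_wf h) | right _ => botT end.

Lemma subE (u : term) d p : u d <> None -> sub u d p = u (d ++ p).
Proof. move=> h; rewrite /sub; by case: dec. Qed.

Definition sigma' (l : term) (s : nat -> term) (t' : term) (pi : pos) (x : nat) : term :=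
  match dec (exists q, l q = Some (LVar x)) with
  | left h => sub t' (pi ++ proj1_sig (constructive_indefinite_description _ h))
  | right _ => s x
  end.

Definition newterm (t' : term) (pi : pos) (rho : rule ar) (s : nat -> term) : term :=
  match dec (t' pi <> None) with
  | left h => mkTerm (@replace_wf t' (substT rho.2 (sigma' rho.1 s t' pi)) pi h)
  | right _ => t' end.

Lemma newtermE (t' : term) pi rho s p : t' pi <> None ->
  newterm t' pi rho s p = replace t' pi (apply_subst rho.2 (sigma' rho.1 s t' pi)) p.
Proof. move=> h; rewrite /newterm; by case: dec. Qed.

Section Match.
Variables (t t' l : term) (s : nat -> term) (pi : pos).
Hypothesis Hle : le t t'.
Hypothesis Hlin : linear l.
Hypothesis Hbf : bot_free l.
Hypothesis H : forall p, t (pi ++ p) = apply_subst l s p.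

Lemma match_gen p q :
  (forall p', t (pi ++ q ++ p') = substf l s q p') ->
  (q = [::] \/ exists q0 i g, q = rcons q0 i /\ t (pi ++ q0) = Some (LFun g)) ->
  t' (pi ++ q ++ p) = substf l (sigma' l s t' pi) q p.
Proof.
elim: p q => [|i p IH] q Hq Iq.
  case El: (l q) => [[g|x|]|].
  - rewrite substf_nil ?El // cats0 -El. have := Hq [::]. rewrite cats0 substf_nil ?El // => e.
    rewrite -e; symmetry; apply Hle; by rewrite e.
  - rewrite (substf_var _ _ El) /sigma'. case: dec => [h|hn]; last by exfalso; apply hn; exists q.
    destruct (constructive_indefinite_description _ h) as [q' hq']; simpl.
    have eq : q' = q by apply: (Hlin hq' El). subst q'.
    have h0 : t (pi ++ q) <> None.
      have := Hq [::]. rewrite cats0 (substf_var _ _ El) => ->. exact: term_root.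
    by rewrite subE ?catA //; apply: (le_dom Hle).
  - by have := Hbf El.
  - rewrite substf_none // cats0.
    have e0 : t (pi ++ q) = None by have := Hq [::]; rewrite cats0 substf_none.
    case: Iq => [eq|[q0 [j [g [eq hg]]]]]; first by subst q; have := term_root (u:=l); rewrite El.
    subst q. rewrite -rcons_cat in e0 *.
    case E: (t' (rcons (pi ++ q0) j)) => [a|] //. exfalso.
    have : t' (rcons (pi ++ q0) j) <> None by rewrite E.
    move/term_child => [g' [hg' hj]].
    have e1 : t' (pi ++ q0) = Some (LFun g) by rewrite -(Hle _) ?hg.
    rewrite e1 in hg'. case: hg' => eg; subst g'.
    have : t (rcons (pi ++ q0) j) <> None by apply/term_child; exists g.
    by rewrite e0.
case El: (l q) => [[g|x|]|].
- rewrite substf_cons ?El // -cat_rcons. apply: IH.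
    move=> p'. rewrite cat_rcons Hq substf_cons ?El //.
  right. exists q, i, g; split => //. have := Hq [::]. by rewrite cats0 substf_nil ?El.
- rewrite (substf_var _ _ El) /sigma'. case: dec => [h|hn]; last by exfalso; apply hn; exists q.
  destruct (constructive_indefinite_description _ h) as [q' hq']; simpl.
  have eq : q' = q by apply: (Hlin hq' El). subst q'.
  have h0 : t (pi ++ q) <> None.
    have := Hq [::]. rewrite cats0 (substf_var _ _ El) => ->. exact: term_root.
  by rewrite subE ?catA //; apply: (le_dom Hle).
- by have := Hbf El.
- rewrite substf_none //.
  have e0 : t (pi ++ q) = None by have := Hq [::]; rewrite cats0 substf_none.
  have e0' : t' (pi ++ q) = None.
    case: Iq => [eq|[q0 [j [g [eq hg]]]]]; first by subst q; have := term_root (u:=l); rewrite El.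
    subst q. rewrite -rcons_cat in e0 *.
    case E: (t' (rcons (pi ++ q0) j)) => [a|] //. exfalso.
    have : t' (rcons (pi ++ q0) j) <> None by rewrite E.
    move/term_child => [g' [hg' hj]].
    have e1 : t' (pi ++ q0) = Some (LFun g) by rewrite -(Hle _) ?hg.
    rewrite e1 in hg'. case: hg' => eg; subst g'.
    have : t (rcons (pi ++ q0) j) <> None by apply/term_child; exists g.
    by rewrite e0.
  case E: (t' (pi ++ q ++ i :: p)) => [a|] //. exfalso.
  have : t' ((pi ++ q) ++ i :: p) <> None by rewrite -catA E.
  by move/term_pre; rewrite e0'.
Qed.

Lemma match_ok p : t' (pi ++ p) = apply_subst l (sigma' l s t' pi) p.
Proof.
have := @match_gen p [::]. rewrite /= /apply_subst. apply; last by left. exact: H.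
Qed.

Lemma sigma_le x : le (s x) (sigma' l s t' pi x).
Proof.
rewrite /sigma'; case: dec => [h|hn]; last exact: le_refl.
destruct (constructive_indefinite_description _ h) as [q hq]; simpl.
have hs : forall p, t (pi ++ q ++ p) = s x p.
  move=> p. rewrite H /apply_subst (@substf_shift l s q p [::]).
    by rewrite /= (substf_var _ _ hq).
  move=> q0 i r e. subst q.
  have : l (q0 ++ i :: r) <> None by rewrite hq.
  by move/term_anc => [g [hg _]]; exists g.
have h0 : t (pi ++ q) <> None by have := hs [::]; rewrite cats0 => ->; exact: term_root.
move=> p hn hb. rewrite subE; last exact: (le_dom Hle).
rewrite -catA -hs; apply: Hle; by rewrite hs.
Qed.

End Match.

Lemma replace_mono (s1 s2 u1 u2 : pos -> option lab) pi :
  lef s1 s2 -> lef u1 u2 -> lef (replace s1 pi u1) (replace s2 pi u2).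
Proof. move=> h1 h2 p; rewrite /replace; case: prefix; [exact: h2 | exact: h1]. Qed.

Lemma step_lift (t t1 t' : term) pi (rho : rule ar) s :
  is_rule rho -> linear rho.1 -> le t t' -> step t t1 pi rho s ->
  step t' (newterm t' pi rho s) pi rho (sigma' rho.1 s t' pi) /\
  le t1 (newterm t' pi rho s).
Proof.
case: rho => l r /= [_ [_ [hbf _]]] hlin hle [H1 H2].
have hpi : t' pi <> None.
  apply: (le_dom hle). rewrite -[pi]cats0 H1 /apply_subst.
  case El: (l [::]) => [[g|x|]|]; try (rewrite substf_nil; [exact: term_root | by rewrite El]).
  rewrite (substf_var _ _ El); exact: term_root.
split; first split.
- move=> p /=. exact: (match_ok hle hlin hbf H1).
- move=> p; by rewrite newtermE.
move=> p hn hb. rewrite newtermE //. rewrite H2 in hn hb *. rewrite /= in hn hb *.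
have hm := replace_mono (pi:=pi) hle (substf_mono (r:=r) (q:=[::]) (sigma_le hle H1)).
exact: (hm p hn hb).
Qed.

End S.

Section O.
Variable W : wordT.
Notation ot := (option W).

Lemma olt_irr (i : ot) : ~ olt i i.
Proof. case: i => [x|] //=. elim: (wlt_wf x) => y _ IH h. exact: (IH _ h h). Qed.

Lemma olt_trans (i j k : ot) : olt i j -> olt j k -> olt i k.
Proof. case: i => [x|]; case: j => [y|]; case: k => [z|] //=; exact: wlt_trans. Qed.

Lemma olt_total (i j : ot) : olt i j \/ i = j \/ olt j i.
Proof.
case: i => [x|]; case: j => [y|] /=; auto.
case: (wlt_total x y) => [|[->|]]; auto.
Qed.

Lemma olt_wf : well_founded (@olt W).
Proof.
have hs : forall x : W, Acc (@olt W) (Some x).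
  move=> x; elim: (wlt_wf x) => y _ IH; constructor => z.
  case: z => [z|] h; last by case: h.
  exact: (IH z h).
move=> j; case: j => [x|]; first exact: hs.
constructor => z; case: z => [z|] h; first exact: hs.
by case: h.
Qed.

Lemma ole_olt_trans (i j k : ot) : ole i j -> olt j k -> olt i k.
Proof. by case=> [h|->] //; apply: olt_trans. Qed.
Lemma olt_ole_trans (i j k : ot) : olt i j -> ole j k -> olt i k.
Proof. by move=> h [h2|<-] //; apply: olt_trans h h2. Qed.
Lemma ole_trans (i j k : ot) : ole i j -> ole j k -> ole i k.
Proof. move=> [h|->] // h2; left; exact: olt_ole_trans h h2. Qed.

Lemma succ_uniq (i i' j : ot) : succ_of i j -> succ_of i' j -> i = i'.
Proof.
move=> [h1 h2] [h1' h2']. case: (olt_total i i') => [h|[//|h]].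
  have := h2 _ h => /(ole_olt_trans) /(_ h1') /olt_irr [].
have := h2' _ h => /(ole_olt_trans) /(_ h1) /olt_irr [].
Qed.

Lemma least_nlt (j k : ot) : is_least j -> ~ olt k j.
Proof. move=> hl h; have := hl k => /ole_olt_trans /(_ h) /olt_irr; done. Qed.

Lemma classify (j : ot) : ~ is_least j -> ~ (exists w, succ_of (Some w) j) -> is_limit j.
Proof.
move=> hl hs; split.
  apply: NNPP => hn; apply: hl => k.
  case: (olt_total j k) => [h|[->|h]]; [by left | by right | ].
  by exfalso; apply hn; exists k.
move=> [w|] h; first by apply hs; exists w.
by case: h.
Qed.

End O.

Section L.
Variable Sig : Type.
Variable ar : Sig -> nat.
Variable W : wordT.
Notation term := (term ar).
Notation le := (@le_bot Sig ar).

Lemma glb_eqv (P Q : term -> Prop) m : (forall u, P u <-> Q u) -> is_glb P m -> is_glb Q m.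
Proof.
move=> e [h1 h2]; split; first by move=> u /e; apply h1.
move=> m' h; apply h2 => u /e; apply h.
Qed.
Lemma lub_eqv (P Q : term -> Prop) m : (forall u, P u <-> Q u) -> is_lub P m -> is_lub Q m.
Proof.
move=> e [h1 h2]; split; first by move=> u /e; apply h1.
move=> m' h; apply h2 => u /e; apply h.
Qed.

Lemma liminf_ext (a b : option W -> term) lam t :
  (forall i, olt i lam -> a i = b i) -> is_liminf a lam t -> is_liminf b lam t.
Proof.
move=> e [m [hm hl]]; exists m; split => // beta hb.
apply: (glb_eqv _ (hm beta hb)) => u; split.
  by move=> [i [h1 [h2 ->]]]; exists i; rewrite e.
by move=> [i [h1 [h2 ->]]]; exists i; rewrite e.
Qed.

Lemma liminf_mono (a b : option W -> term) lam x y :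
  (forall i, olt i lam -> le (a i) (b i)) -> is_liminf a lam x -> is_liminf b lam y -> le x y.
Proof.
move=> hab [ma [hma hla]] [mb [hmb hlb]].
apply: (proj2 hla) => u [beta [hb ->]].
apply: le_trans (proj1 hlb (mb beta) _); last by exists beta.
apply: (proj2 (hmb beta hb)) => v [i [h1 [h2 ->]]].
apply: le_trans (hab i h2).
apply: (proj1 (hma beta hb)); by exists i.
Qed.

Lemma liminf_ex (a : option W -> term) lam :
  (exists i, olt i lam) -> exists t, is_liminf a lam t.
Proof.
move=> hne.
pose P beta := fun u => exists iota, ole beta iota /\ olt iota lam /\ u = a iota.
have hg : forall beta, olt beta lam -> exists m, is_glb (P beta) m.
  move=> beta hb; apply: glb_ex; exists (a beta); exists beta; split => //; by right.
pose m beta := match dec (exists m, is_glb (P beta) m) with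
  | left h => proj1_sig (constructive_indefinite_description _ h) | right _ => a beta end.
have hm : forall beta, olt beta lam -> is_glb (P beta) (m beta).
  move=> beta hb; rewrite /m; case: dec => [h|hn]; last by exfalso; apply hn; apply hg.
  by destruct (constructive_indefinite_description _ h).
pose D := fun u => exists beta, olt beta lam /\ u = m beta.
have hD1 : exists u, D u by case: hne => i hi; exists (m i), i.
have hmono : forall b1 b2, olt b1 lam -> olt b2 lam -> ole b1 b2 -> le (m b1) (m b2).
  move=> b1 b2 h1 h2 h12. apply: (proj2 (hm b2 h2)) => u [i [hi1 [hi2 ->]]].
  apply: (proj1 (hm b1 h1)); exists i; split => //; exact: ole_trans h12 hi1.
have hD2 : directed D.
  move=> u v [b1 [h1 ->]] [b2 [h2 ->]].
  case: (olt_total b1 b2) => [h|[e|h]].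
  - exists (m b2); split; first by exists b2.
    split; [apply: hmono => //; by left | exact: le_refl].
  - subst b2; exists (m b1); split; first by exists b1. split; exact: le_refl.
  - exists (m b1); split; first by exists b1.
    split; [exact: le_refl | apply: hmono => //; by left].
exists (mkTerm (lub_wf hD1 hD2)), m; split => //. exact: lub_ok.
Qed.

End L.

Section Main.
Variables (Sig : Type) (ar : Sig -> nat) (R : rule ar -> Prop).
Hypothesis HTRS : TRS R.
Hypothesis HLL : left_linear R.
Variable S : reduction R.
Variable s : term ar.
Hypothesis Hs : starts_at S s.
Notation W := (rW S).
Notation T := (@rterm _ _ _ S).
Notation le := (@le_bot Sig ar).

Definition liminfc (g : option W -> term ar) (j : option W) : term ar :=
  match dec (exists t, is_liminf g j t) with
  | left h => proj1_sig (constructive_indefinite_description _ h)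
  | right _ => s end.

Lemma liminfcP (g : option W -> term ar) j : (exists i, olt i j) -> is_liminf g j (liminfc g j).
Proof.
move=> h; rewrite /liminfc; case: dec => [h1|hn]; last by exfalso; apply hn; apply: liminf_ex.
by destruct (constructive_indefinite_description _ h1).
Qed.

Definition G (j : option W) (g : option W -> term ar) : term ar :=
  if dec (is_least j) then s
  else match dec (exists w, succ_of (Some w) j) with
   | left h => let w := proj1_sig (constructive_indefinite_description _ h) in
               newterm (g (Some w)) ((@rpos _ _ _ S) w) ((@rrule _ _ _ S) w) ((@rsubst _ _ _ S) w)
   | right _ => liminfc g j
   end.

Definition extf (j : option W) (f : forall i, olt i j -> term ar) (i : option W) : term ar :=
  match dec (olt i j) with left h => f i h | right _ => s end.

Definition F (j : option W) (f : forall i, olt i j -> term ar) : term ar := G j (extf f).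

Definition T' : option W -> term ar := Fix (@olt_wf W) (fun _ => term ar) F.

Lemma T'_eq j : T' j = G j (fun i => match dec (olt i j) with left _ => T' i | right _ => s end).
Proof.
rewrite /T' Fix_eq /F /extf //.
move=> x f g h. congr (G x _). apply: functional_extensionality => i.
case: dec => // hi; exact: h.
Qed.

Lemma T'_least j : is_least j -> T' j = s.
Proof. move=> h; rewrite T'_eq /G; by case: dec. Qed.

Lemma T'_succ w j : succ_of (Some w) j ->
  T' j = newterm (T' (Some w)) ((@rpos _ _ _ S) w) ((@rrule _ _ _ S) w) ((@rsubst _ _ _ S) w).
Proof.
move=> hs; rewrite T'_eq /G. case: dec => [hl|hnl0].
  by exfalso; apply: (least_nlt hl (proj1 hs)).
case: dec => [h|hn]; last by exfalso; apply hn; exists w.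
destruct (constructive_indefinite_description _ h) as [w' hw']; simpl.
have e : Some w' = Some w := succ_uniq hw' hs. case: e => ->.
case: dec => // hn; by exfalso; apply hn; case: hs.
Qed.

Lemma T'_limit j : is_limit j -> is_liminf T' j (T' j).
Proof.
move=> hl. rewrite [T' j]T'_eq /G. case: dec => [hle|hnl0].
  by exfalso; case: hl => [[i hi] _]; apply: (least_nlt hle hi).
case: dec => [[w hw]|hns0]; first by exfalso; apply: (proj2 hl _ hw).
have := liminfcP (fun i => match dec (olt i j) with left _ => T' i | right _ => s end) (proj1 hl).
apply: liminf_ext => i hi. by case: dec.
Qed.

Variable c : option W -> term ar.
Hypothesis Hc1 : forall w p, c (Some w) p = replace (T (Some w)) ((@rpos _ _ _ S) w) (@bot_fun Sig) p.
Hypothesis Hc2 : forall w, is_limit (Some w) -> is_liminf c (Some w) (T (Some w)).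

Lemma c_le w : le (c (Some w)) (T (Some w)).
Proof.
move=> p; rewrite Hc1 /replace. case: prefix => // .
by case: (drop _ _).
Qed.

Lemma inv j : (j = None -> closed S) -> le (T j) (T' j).
Proof.
move: j; apply: (well_founded_ind (@olt_wf W)) => j IH hj.
case: (dec (is_least j)) => [hl|hnl].
  rewrite T'_least // Hs //; exact: le_refl.
case: (dec (exists w, succ_of (Some w) j)) => [[w hw]|hns].
  rewrite (T'_succ hw).
  have hwR := @rrule_in _ _ _ S w.
  have := step_lift (HTRS hwR) (HLL hwR) (IH (Some w) (proj1 hw) (fun e => ltac:(discriminate))) (rstep hw).
  by case.
have hlim := classify hnl hns.
case: j IH hj hnl hns hlim => [w|] IH hj hnl hns hlim; last by exfalso; exact: (hj erefl).
apply: (liminf_mono (a:=c) (b:=T')) (Hc2 hlim) (T'_limit hlim).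
move=> [v|] hv //. refine (le_trans (c_le (w:=v)) (IH (Some v) hv _)) => e; discriminate.
Qed.

Definition sg (w : W) : nat -> term ar :=
  sigma' ((@rrule _ _ _ S) w).1 ((@rsubst _ _ _ S) w) (T' (Some w)) ((@rpos _ _ _ S) w).

Lemma Hstep w j : succ_of (Some w) j ->
  step (T' (Some w)) (T' j) ((@rpos _ _ _ S) w) ((@rrule _ _ _ S) w) (sg w).
Proof.
move=> hw. rewrite (T'_succ hw).
have hwR := @rrule_in _ _ _ S w.
have := step_lift (HTRS hwR) (HLL hwR) (inv (j:=Some w) (fun e => ltac:(discriminate))) (rstep hw).
by case.
Qed.

Definition S' : reduction R := @Reduction Sig ar R W T' ((@rpos _ _ _ S)) ((@rrule _ _ _ S)) sg (@rrule_in _ _ _ S) Hstep.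

End Main.

Theorem proposition3p7 (Sig : Type) (ar : Sig -> nat) (R : rule ar -> Prop)
  (HTRS : TRS R) (HLL : left_linear R) (s t : term ar) :
  strongly_p_converges_to R s t ->
  exists t' : term ar, le_bot t t' /\ weakly_p_converges_to R s t'.
Proof.
move=> [S [Hs [c [Hc1 [Hc2 [Hc3 Hc4]]]]]].
pose TT := @T' _ _ _ S s.
pose t' := if dec (closed S) then TT None else liminfc s TT None.
exists t'. split.
  rewrite /t'; case: (dec (closed S)) => [hc|hnc] /=.
    rewrite (Hc3 hc). exact: (inv HTRS HLL Hs Hc1 Hc2 (j:=None) (fun _ => hc)).
  have hl : is_limit (None : option (rW S)) by apply: NNPP.
  apply: (liminf_mono (a:=c) (b:=TT)) (Hc4 hnc) (liminfcP s TT (proj1 hl)).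
  move=> [v|] hv //. refine (le_trans (c_le Hc1 (w:=v)) _).
  exact: (inv HTRS HLL Hs Hc1 Hc2 (j:=Some v) (fun e => ltac:(discriminate))).
exists (S' HTRS HLL Hs Hc1 Hc2). split.
  move=> j hj /=. exact: T'_least.
split; [|split].
- move=> w hw /=. exact: T'_limit.
- move=> hc /=. rewrite /t'. case: (dec (closed S)) => [h1|hn] //; exfalso; apply: hn; exact: hc.
- move=> hc /=. rewrite /t'. case: (dec (closed S)) => [h|hn] /=; first by exfalso; apply: hc; exact: h.
  apply: liminfcP. have hl : is_limit (None : option (rW S)) by apply: NNPP.
  exact: (proj1 hl).
Qed.
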